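(* Let $L>0$, $C\subset\mathbb{R}^n$ a nonempty closed convex set and $(f,h)\in\mathcal{B}_L(C)$. Let $\{x_k\}_{k\ge0}$ be generated by NoLips with constant step size $\lambda\in(0,1/L]$ from $x_0\in\operatorname{int}\operatorname{dom}h$. Then for every $k\ge2$, \[ \min_{1\le i\le k}D_h(x_{i-1},x_i)\le\frac{2D_h(x_*,x_0)}{k(k-1)}, \] where $x_*\in\operatorname{argmin}_C f\cap\operatorname{dom}h$.
   Context: $h$ is Legendre with zone $C$ if it is closed convex proper, $\overline{\operatorname{dom}h}=C$, continuously differentiable and strictly convex on $\operatorname{int}\operatorname{dom}h\ne\emptyset$, and $\|\nabla h(x_k)\|\to\infty$ for every sequence in $\operatorname{int}\operatorname{dom}h$ converging to a boundary point of $\operatorname{dom}h$. $D_h(x,y)=h(x)-h(y)-\langle\nabla h(y),x-y\rangle$. $(f,h)\in\mathcal{B}_L(C)$ means: $h$ is Legendre with zone $C$; $f:\mathbb{R}^n\to\mathbb{R}\cup\{+\infty\}$ is closed convex proper with $\operatorname{dom}h\subset\operatorname{dom}f$, continuously differentiable on $\operatorname{int}\operatorname{dom}h$; for every $\lambda>0$, $x\in\operatorname{int}\operatorname{dom}h$, $p\in\mathbb{R}^n$ the problem $\min_u\langle p,u-x\rangle+\frac1\lambda D_h(u,x)$ has a unique minimizer lying in $\operatorname{int}\operatorname{dom}h$; $\inf_C f>-\infty$; some minimizer of $f$ on $C$ lies in $\operatorname{dom}h$; and $Lh-f$ is convex on $C$. NoLips iterates $x_{k+1}=\operatorname{argmin}_{u\in\mathbb{R}^n}\langle\nabla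 f(x_k),u-x_k\rangle+\frac1\lambda D_h(u,x_k)$. *)

(* Defs.v *)
From HB Require Import structures.
From mathcomp Require Import all_boot all_order all_algebra.
From mathcomp Require Import all_classical all_reals all_analysis.
Set Implicit Arguments. Unset Strict Implicit. Unset Printing Implicit Defensive.
Import Order.TTheory GRing.Theory Num.Theory.
Import numFieldNormedType.Exports.
Local Open Scope classical_set_scope.
Local Open Scope ring_scope.

Section Defs.
Context {R : realType} {n : nat}.
Notation V := 'rV[R]_n.

Definition ip (u v : V) : R := \sum_(i < n) u 0 i * v 0 i.

Definition dom (f : V -> \bar R) : set V := [set x | (f x < +oo)%E].

Definition proper_fun (f : V -> \bar R) : Prop :=
  (forall x, (-oo < f x)%E) /\ (exists x, (f x < +oo)%E).

Definition convex_efun (f : V -> \bar R) : Prop :=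
  forall (x y : V) (t : R), 0 <= t <= 1 ->
    (f ((1 - t) *: x + t *: y)%R <= (1 - t)%:E * f x + t%:E * f y)%E.

(* closed = lower semicontinuous = all sublevel sets closed *)
Definition closed_fun (f : V -> \bar R) : Prop :=
  forall a : R, closed [set x | (f x <= a%:E)%E].

Definition convex_set_ (C : set V) : Prop :=
  forall x y (t : R), C x -> C y -> 0 <= t <= 1 -> C ((1 - t) *: x + t *: y).

Definition grad (f : V -> \bar R) (x : V) : V :=
  \row_(i < n) ('d (fine \o f) x) (delta_mx 0 i).

Definition cont_diff_on (f : V -> \bar R) (U : set V) : Prop :=
  (forall x, U x -> differentiable (fine \o f) x) /\
  (forall x, U x -> {for x, continuous (grad f)}).

Definition strictly_convex_on (f : V -> \bar R) (U : set V) : Prop :=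
  forall x y (t : R), U x -> U y -> x != y -> 0 < t < 1 ->
    (f ((1 - t) *: x + t *: y)%R < (1 - t)%:E * f x + t%:E * f y)%E.

Definition Legendre (h : V -> \bar R) (C : set V) : Prop :=
  closed_fun h /\ convex_efun h /\ proper_fun h /\
      closure (dom h) = C /\
      (interior (dom h) !=set0) /\
      cont_diff_on h (interior (dom h)) /\
      strictly_convex_on h (interior (dom h)) /\
      forall (u : nat -> V) (z : V),
        (forall k, interior (dom h) (u k)) ->
        u @ \oo --> z ->
        (closure (dom h) `\` interior (dom h)) z ->
        (fun k => `|grad h (u k)|) @ \oo --> +oo.

Definition Dh (h : V -> \bar R) (x y : V) : \bar R :=
  (h x - h y - (ip (grad h y) (x - y))%:E)%E.

Definition nolips_obj (h : V -> \bar R) (lam : R) (p x u : V) : \bar R :=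
  ((ip p (u - x))%:E + (lam^-1)%:E * Dh h u x)%E.

Definition is_minimizer (F : V -> \bar R) (u : V) : Prop :=
  forall v, (F u <= F v)%E.

Definition B_L (L : R) (C : set V) (f h : V -> \bar R) : Prop :=
  Legendre h C /\
      (closed_fun f /\ convex_efun f /\ proper_fun f) /\
      dom h `<=` dom f /\
      cont_diff_on f (interior (dom h)) /\
      (forall (lam : R) (x p : V), 0 < lam -> interior (dom h) x ->
         exists u, [/\ interior (dom h) u,
                       is_minimizer (nolips_obj h lam p x) u &
                       forall v, is_minimizer (nolips_obj h lam p x) v -> v = u]) /\
      (exists m : R, forall x, C x -> (m%:E <= f x)%E) /\
      (exists xs, [/\ C xs, dom h xs & forall y, C y -> (f xs <= f y)%E]) /\
      (forall x y (t : R), C x -> C y -> dom h x -> dom h y -> 0 <= t <= 1 ->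
         let g := fun z => L * fine (h z) - fine (f z) in
         g ((1 - t) *: x + t *: y) <= (1 - t) * g x + t * g y).

End Defs.

(* Main.v *)
Require Import Defs.
From HB Require Import structures.
From mathcomp Require Import all_boot all_order all_algebra.
From mathcomp Require Import all_classical all_reals all_analysis.
From mathcomp Require Import ring lra.
Set Implicit Arguments. Unset Strict Implicit. Unset Printing Implicit Defensive.
Import Order.TTheory GRing.Theory Num.Theory.
Import numFieldNormedType.Exports.
Local Open Scope classical_set_scope.
Local Open Scope ring_scope.

Section S.
Context {R : realType} {n : nat}.
Notation V := 'rV[R]_n.

Lemma dquot (F : V -> R) (x w : V) : differentiable F x ->
  (fun t : R => t^-1 * (F (t *: w + x) - F x)) @ 0^'+ --> 'd F x w.
Proof.
move=> dF; rewrite -deriveE //.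
apply: cvg_dnbhs_at_right.
have := @diff_derivable _ _ _ _ _ w dF.
move=> /cvg_ex[l Hl].
by rewrite /derive (cvg_lim _ Hl).
Qed.

Lemma lim_le (q : R -> R) c a :
  q @ 0^'+ --> c -> (\forall t \near 0^'+, q t <= a) -> c <= a.
Proof. by move=> H1 H2; apply: (cvgr_to_le H1 H2). Qed.
Lemma lim_ge (q : R -> R) c a :
  q @ 0^'+ --> c -> (\forall t \near 0^'+, a <= q t) -> a <= c.
Proof. by move=> H1 H2; apply: (cvgr_to_ge H1 H2). Qed.

Lemma near_right (P : R -> Prop) (d : R) : 0 < d ->
  (forall t, 0 < t -> t < d -> P t) -> \forall t \near 0^'+, P t.
Proof.
move=> d0 HP; near=> t; apply: HP.
  by near: t; exact: nbhs_right_gt.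
by near: t; exact: nbhs_right_lt.
Unshelve. all: by end_near. Qed.

Lemma cvg_comb (q1 q2 : R -> R) a b (L : R) :
  q1 @ 0^'+ --> a -> q2 @ 0^'+ --> b ->
  (fun t => L * q1 t - q2 t) @ 0^'+ --> L * a - b.
Proof.
move=> H1 H2; apply: cvgB => //; apply: cvgM => //; exact: cvg_cst.
Qed.

Lemma near_dom (A : set V) (y w : V) : nbhs y A ->
  \forall t \near 0^'+, A (t *: w + y).
Proof.
move=> Ay.
have H : (fun t : R => t *: w + y) @ 0^'+ --> y.
  apply: cvg_at_right_filter.
  rewrite -[X in _ --> X]add0r -(scale0r w).
  apply: cvgD; last exact: cvg_cst.
  apply: cvgZr_tmp; exact: cvg_id.
exact: H.
Qed.

Lemma ip_grad (f : V -> \bar R) (x w : V) :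
  ip (grad f x) w = 'd (fine \o f) x w.
Proof.
rewrite [in RHS](row_sum_delta w) linear_sum /ip.
by apply: eq_bigr => i _; rewrite linearZ /= mxE mulrC.
Qed.

Lemma seg_eq (x y : V) (t : R) : (1 - t) *: x + t *: y = t *: (y - x) + x.
Proof. by rewrite scalerBl scale1r scalerBr addrAC [RHS]addrC addrA. Qed.

Lemma fine_le_E (e : \bar R) (r : R) : (-oo < e)%E -> (e <= r%:E)%E -> fine e <= r.
Proof. by case: e => //= r' _; rewrite lee_fin. Qed.

Lemma finE (e : \bar R) : (-oo < e)%E -> (e < +oo)%E -> e = (fine e)%:E.
Proof. by case: e. Qed.

Lemma conv_grad (phi : V -> \bar R) (x y : V) :
  convex_efun phi -> (forall z, (-oo < phi z)%E) ->
  differentiable (fine \o phi) x ->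
  phi x = (fine (phi x))%:E -> phi y = (fine (phi y))%:E ->
  'd (fine \o phi) x (y - x) <= fine (phi y) - fine (phi x).
Proof.
move=> cv pr dphi ex ey.
apply: (lim_le (dquot (w := y - x) dphi)).
apply: (near_right (d := 1)) => // t t0 t1.
have t01 : 0 <= t <= 1 by apply/andP; split; apply/ltW.
have := cv x y t t01; rewrite seg_eq ex ey -!EFinM -EFinD => /(fine_le_E (pr _)) le.
rewrite mulrC ler_pdivrMr //.
move: le; set a := fine _; set u := fine (phi x); set v := fine (phi y).
move=> le; rewrite /= -/a -/u; lra.
Qed.


Lemma gconv (h f : V -> \bar R) (L : R) (x y : V) :
  differentiable (fine \o h) x -> differentiable (fine \o f) x ->
  (forall t : R, 0 <= t <= 1 ->
     let g := fun z => L * fine (h z) - fine (f z) in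
     g ((1 - t) *: x + t *: y) <= (1 - t) * g x + t * g y) ->
  L * 'd (fine \o h) x (y - x) - 'd (fine \o f) x (y - x) <=
    (L * fine (h y) - fine (f y)) - (L * fine (h x) - fine (f x)).
Proof.
move=> dh df cv.
apply: (lim_le (cvg_comb (L := L) (dquot (w := y - x) dh) (dquot (w := y - x) df))).
apply: (near_right (d := 1)) => // t t0 t1.
have t01 : 0 <= t <= 1 by apply/andP; split; apply/ltW.
have := cv t t01; rewrite seg_eq /= => le.
set A := fine (h _); set B := fine (f _).
have -> : L * (t^-1 * (A - fine (h x))) - t^-1 * (B - fine (f x)) =
   (L * A - B - (L * fine (h x) - fine (f x))) / t by rewrite /=; field; rewrite gt_eqF.
rewrite ler_pdivrMr //; move: le; rewrite -/A -/B; lra.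
Qed.

Lemma objE (h : V -> \bar R) (lam : R) (p x v : V) :
  (forall z, (-oo < h z)%E) -> dom h x -> dom h v ->
  nolips_obj h lam p x v =
   (ip p (v - x) + lam^-1 * (fine (h v) - fine (h x) - ip (grad h x) (v - x)))%:E.
Proof.
move=> pr dx dv; rewrite /nolips_obj /Dh.
rewrite (finE (pr v) dv) (finE (pr x) dx) /=.
by rewrite -!EFinB -EFinM -EFinD.
Qed.

Lemma dlin (F : V -> R) (t : R) (x w y z : V) :
  'd F x (t *: w + y - z) = t * 'd F x w + 'd F x (y - z).
Proof. by rewrite -addrA linearD linearZ. Qed.

Lemma arith1 (lam t a b A B P Q X : R) : 0 < lam -> 0 < t ->
  A + lam^-1 * (Q - X - B) <= t * a + A + lam^-1 * (P - X - (t * b + B)) ->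
  b - lam * a <= t^-1 * (P - Q).
Proof.
move=> lam0 t0 le.
have h1 : 0 <= t * a + lam^-1 * (P - Q - t * b) by lra.
have h2 : 0 <= lam * (t * a + lam^-1 * (P - Q - t * b)) by rewrite mulr_ge0 // ltW.
have e : lam * (t * a + lam^-1 * (P - Q - t * b)) = lam*t*a + (P - Q - t*b).
  by field; rewrite gt_eqF.
rewrite e in h2.
rewrite -(ler_pM2l t0) mulrA mulrV ?unitfE ?gt_eqF // mul1r.
lra.
Qed.

Lemma fermat (h f : V -> \bar R) (lam : R) (x y w : V) :
  0 < lam -> (forall z, (-oo < h z)%E) ->
  differentiable (fine \o h) y -> nbhs y (dom h) -> dom h x ->
  is_minimizer (nolips_obj h lam (grad f x) x) y ->
  'd (fine \o h) x w - lam * 'd (fine \o f) x w <= 'd (fine \o h) y w.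
Proof.
move=> lam0 pr dy Ny dx mn.
apply: (lim_ge (dquot (w := w) dy)).
have N := near_dom w Ny.
near=> t.
have t0 : 0 < t by near: t; exact: nbhs_right_gt.
have Dt : dom h (t *: w + y) by near: t; exact: N.
have := mn (t *: w + y).
rewrite !objE //; last exact: nbhs_singleton.
rewrite lee_fin !ip_grad !dlin /=.
set a := 'd _ x w; set b := 'd _ x w.
set A := 'd _ x (y - x); set B := 'd _ x (y - x).
set P := fine (h (t *: w + y)); set Q := fine (h y).
move=> le.
rewrite /= -/P -/Q; exact: arith1 le.
Unshelve. all: by end_near. Qed.


End S.

Section A.
Context {R : realType}.

Fixpoint mu (d : nat -> R) (m : nat) : R :=
  match m with 0 => d 1%N | m'.+1 => Num.min (mu d m') (d m'.+1) end.

Lemma bigmin_mu (d : nat -> R) m :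
  (\big[mine/+oo%E]_(1 <= i < m.+2) (d i)%:E = (mu d m.+1)%:E)%E.
Proof.
elim: m => [|m IH].
  by rewrite big_nat_recr //= big_geq // minye /= minxx.
by rewrite big_nat_recr // IH /= !EFin_min.
Qed.

Lemma arithG1 (lam L Hx Hy Fx Fy p q r : R) : 0 < lam -> lam * L <= 1 ->
  - p + lam * q <= r ->
  L * p - q <= (L * Hy - Fy) - (L * Hx - Fx) ->
  p <= Hy - Hx ->
  Hx - Hy - r <= lam * (Fx - Fy).
Proof.
move=> l0 lL a b c.
have b' := ler_wpM2l (ltW l0) b.
have c' : lam * L * (Hy - Hx - p) <= Hy - Hx - p.
  by rewrite -[leRHS]mul1r; apply: ler_wpM2r => //; rewrite subr_ge0.
lra.
Qed.

Lemma arithG2 (lam L Hx Hy Hs Fx Fy Fs p q p' q' r' : R) : 0 < lam -> lam * L <= 1 ->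
  p' - lam * q' <= r' ->
  L * p - q <= (L * Hy - Fy) - (L * Hx - Fx) ->
  p <= Hy - Hx ->
  q' + q <= Fs - Fx ->
  lam * (Fy - Fs) <= (Hs - Hx - (p' + p)) - (Hs - Hy - r').
Proof.
move=> l0 lL a b c d.
have b' := ler_wpM2l (ltW l0) b.
have c' : lam * L * (Hy - Hx - p) <= Hy - Hx - p.
  by rewrite -[leRHS]mul1r; apply: ler_wpM2r => //; rewrite subr_ge0.
have d' := ler_wpM2l (ltW l0) d.
lra.
Qed.

Lemma inv_lemma (d F e : nat -> R) (lam Fs : R) : 0 < lam ->
  (forall m, d m.+1 <= lam * (F m - F m.+1)) ->
  (forall m, lam * (F m.+1 - Fs) <= e m - e m.+1) ->
  forall m, (m%:R + 1) * m%:R * mu d m.+1 + 2 * m%:R * lam * (F m.+1 - Fs)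
     <= 2 * (e 0%N - e m).
Proof.
move=> l0 G1 G2; elim=> [|m IH].
  by rewrite !(mulr0, mul0r, add0r, subrr).
have m1 : (m.+1)%:R = m%:R + 1 :> R by rewrite -natr1.
rewrite m1.
set M := m%:R.
have M0 : 0 <= M by rewrite /M ler0n.
have h1 : mu d m.+2 <= mu d m.+1 by rewrite /= ge_min lexx.
have h2 : mu d m.+2 <= d m.+2 by rewrite /= ge_min lexx orbT.
have P1 : 0 <= M + 1 by rewrite addr_ge0.
have P2 : 0 <= (M + 1) * M by rewrite mulr_ge0.
have h1' := ler_wpM2l P2 h1.
have h2' := ler_wpM2l P1 h2.
have h3 := ler_wpM2l P1 (G1 m.+1).
have := G2 m; rewrite -/M => g2.
move: IH; rewrite -/M => IH.
lra.
Qed.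

Lemma final_ar (K mu e0 : R) : 1 < K -> K * (K - 1) * mu <= 2 * e0 ->
  mu <= 2 / (K * (K - 1)) * e0.
Proof.
move=> K1 le.
have P : 0 < K * (K - 1) by rewrite mulr_gt0 // ?subr_gt0 // (lt_trans _ K1).
by rewrite mulrAC ler_pdivlMr // mulrC.
Qed.

Lemma arithG1' (lam L Hx Hy Fx Fy p q r pN qN : R) : 0 < lam -> lam * L <= 1 ->
  pN = - p -> qN = - q ->
  pN - lam * qN <= r ->
  L * p - q <= (L * Hy - Fy) - (L * Hx - Fx) ->
  p <= Hy - Hx ->
  Hx - Hy - r <= lam * (Fx - Fy).
Proof.
move=> l0 lL -> -> a; apply: arithG1 => //.
by move: a; rewrite mulrN opprK.
Qed.

Lemma arithG2' (lam L Hx Hy Hs Fx Fy Fs p q p' q' r' P Q : R) : 0 < lam -> lam * L <= 1 ->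
  P = p' + p -> Q = q' + q ->
  p' - lam * q' <= r' ->
  L * p - q <= (L * Hy - Fy) - (L * Hx - Fx) ->
  p <= Hy - Hx ->
  Q <= Fs - Fx ->
  lam * (Fy - Fs) <= (Hs - Hx - P) - (Hs - Hy - r').
Proof. by move=> l0 lL -> ->; apply: arithG2. Qed.

Lemma ar_fin (M mu lam Fk Fs e0 em : R) : 0 <= M -> 0 < lam -> Fs <= Fk -> 0 <= em ->
  (M + 1) * M * mu + 2 * M * lam * (Fk - Fs) <= 2 * (e0 - em) ->
  (M + 1) * ((M + 1) - 1) * mu <= 2 * e0.
Proof.
move=> M0 l0 F em0 le.
have p : 0 <= 2 * M * lam * (Fk - Fs).
  by rewrite !mulr_ge0 // ?subr_ge0 // ltW.
have -> : M + 1 - 1 = M by rewrite addrK.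
lra.
Qed.

End A.

Unset Implicit Arguments. Set Strict Implicit.

Theorem proposition4p6 (R : realType) (n : nat) (L : R) (C : set 'rV[R]_n)
  (f h : 'rV[R]_n -> \bar R) (lam : R) (x : nat -> 'rV[R]_n) :
  0 < L ->
  C !=set0 -> closed C -> convex_set_ C ->
  B_L L C f h ->
  0 < lam -> lam <= L^-1 ->
  interior (dom h) (x 0%N) ->
  (forall k : nat, is_minimizer (nolips_obj h lam (grad f (x k)) (x k)) (x k.+1)) ->
  forall xs : 'rV[R]_n,
    C xs -> dom h xs -> (forall y, C y -> (f xs <= f y)%E) ->
  forall k : nat, (2 <= k)%N ->
    (\big[mine/+oo%E]_(1 <= i < k.+1) Dh h (x i.-1) (x i)
       <= (2 / (k%:R * (k%:R - 1)))%:E * Dh h xs (x 0%N))%E.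
Proof.
move=> L0 _ _ _ [Leg [[_ [fcv fpr]] [domhf [[fdiff _] [uniq [_ [_ Lconv]]]]]]].
move=> lam0 lamL x0I hx xs Cxs dxs xsmin k k2.
case: Leg => [_ [hcv [hpr [clos [_ [[hdiff _] _]]]]]].
have xI : forall m, interior (dom h) (x m).
  elim=> [//|m IH].
  have [u [uI umin uuniq]] := uniq lam (x m) (grad f (x m)) lam0 IH.
  by rewrite (uuniq _ (hx m)).
have Isub : forall z, interior (dom h) z -> dom h z.
  by move=> z; apply: interior_subset.
have domC : forall z, dom h z -> C z.
  by move=> z dz; rewrite -clos; apply: subset_closure.
have hfin : forall z, dom h z -> h z = (fine (h z))%:E.
  by move=> z dz; apply: finE (hpr.1 z) dz.
have ffin : forall z, dom h z -> f z = (fine (f z))%:E.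
  by move=> z dz; apply: finE (fpr.1 z) (domhf z dz).
have lL : lam * L <= 1.
  by rewrite -(ler_pM2r L0) in lamL; rewrite (le_trans lamL) // mulVf // gt_eqF.
pose D a b := fine (h a) - fine (h b) - 'd (fine \o h) b (a - b).
have DhE : forall a b, dom h a -> dom h b -> Dh h a b = (D a b)%:E.
  move=> a b da db; rewrite /Dh ip_grad (hfin a da) (hfin b db) /=.
  by rewrite -!EFinB.
have dxm : forall m, differentiable (fine \o h) (x m) := fun m => hdiff _ (xI m).
have dfm : forall m, differentiable (fine \o f) (x m) := fun m => fdiff _ (xI m).
have dom_x : forall m, dom h (x m) := fun m => Isub _ (xI m).
have Gb : forall m, L * 'd (fine \o h) (x m) (x m.+1 - x m) - 'd (fine \o f) (x m) (x m.+1 - x m) <=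
    (L * fine (h (x m.+1)) - fine (f (x m.+1))) - (L * fine (h (x m)) - fine (f (x m))).
  move=> m; apply: (gconv (dxm m) (dfm m)) => t t01.
  exact: (Lconv (x m) (x m.+1) t (domC _ (dom_x m)) (domC _ (dom_x m.+1)) (dom_x m) (dom_x m.+1) t01).
have Gc : forall m, 'd (fine \o h) (x m) (x m.+1 - x m) <= fine (h (x m.+1)) - fine (h (x m)).
  move=> m; exact: (conv_grad hcv hpr.1 (dxm m) (hfin _ (dom_x m)) (hfin _ (dom_x m.+1))).
have G1 : forall m, D (x m) (x m.+1) <= lam * (fine (f (x m)) - fine (f (x m.+1))).
  move=> m.
  have a := fermat (x m - x m.+1) lam0 hpr.1 (dxm m.+1) (xI m.+1) (dom_x m) (hx m).
  have e1 : 'd (fine \o h) (x m) (x m - x m.+1) = - 'd (fine \o h) (x m) (x m.+1 - x m).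
    by rewrite -linearN opprB.
  have e2 : 'd (fine \o f) (x m) (x m - x m.+1) = - 'd (fine \o f) (x m) (x m.+1 - x m).
    by rewrite -linearN opprB.
  rewrite /D; exact: (arithG1' lam0 lL e1 e2 a (Gb m) (Gc m)).
have G2 : forall m, lam * (fine (f (x m.+1)) - fine (f xs)) <= D xs (x m) - D xs (x m.+1).
  move=> m.
  have a := fermat (xs - x m.+1) lam0 hpr.1 (dxm m.+1) (xI m.+1) (dom_x m) (hx m).
  have d := conv_grad fcv fpr.1 (dfm m) (ffin _ (dom_x m)) (ffin _ dxs).
  have e : xs - x m = (xs - x m.+1) + (x m.+1 - x m) by rewrite addrA subrK.
  have e3 : 'd (fine \o h) (x m) (xs - x m) = 'd (fine \o h) (x m) (xs - x m.+1) + 'd (fine \o h) (x m) (x m.+1 - x m).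
    by rewrite e linearD.
  have e4 : 'd (fine \o f) (x m) (xs - x m) = 'd (fine \o f) (x m) (xs - x m.+1) + 'd (fine \o f) (x m) (x m.+1 - x m).
    by rewrite e linearD.
  rewrite /D; exact: (arithG2' (fine (h xs)) lam0 lL e3 e4 a (Gb m) (Gc m) d).
have eN : forall m, 0 <= D xs (x m).
  move=> m; have c := conv_grad hcv hpr.1 (dxm m) (hfin _ (dom_x m)) (hfin _ dxs).
  by rewrite /D subr_ge0.
have FN : forall m, fine (f xs) <= fine (f (x m)).
  move=> m; have := xsmin (x m) (domC _ (dom_x m)).
  by rewrite (ffin _ dxs) (ffin _ (dom_x m)) lee_fin.
have inv := inv_lemma (d := fun i => D (x i.-1) (x i)) (F := fun m => fine (f (x m)))
  (e := fun m => D xs (x m)) (Fs := fine (f xs)) lam0 G1 G2.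
rewrite (eq_bigr (fun i => (D (x i.-1) (x i))%:E)); last first.
  by move=> i _; rewrite DhE.
case: k k2 => [|[|m]] // _.
rewrite bigmin_mu (DhE _ _ dxs (dom_x 0%N)) -EFinM lee_fin.
apply: final_ar; first by rewrite ltr1n.
have m2 : (m.+2)%:R = (m.+1)%:R + 1 :> R by rewrite -natr1.
rewrite m2.
exact: (ar_fin (ler0n _ _) lam0 (FN _) (eN _) (inv m.+1)).
Qed.
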